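(* Let $f\in C^1[0,1]$ with $f(0)=0$, $h:=f'$, and $q$ satisfying (q). Then (i) $\beta(c_2)<\beta(c_1)$ for all $c_2>c_1>c^*$; (ii) $\beta(c)\to-\infty$ as $c\to+\infty$.
   Context: Condition (q): $q\in C[0,1]$, $q>0$ on $(0,1)$, $q(0)=q(1)=0$, and $\limsup_{\varphi\to0^+}q(\varphi)/\varphi<+\infty$. For $c\in\mathbb R$, a solution of problem $(P_c)$ is a function $z\in C[0,1]\cap C^1(0,1)$ with $\dot z(\varphi)=h(\varphi)-c-q(\varphi)/z(\varphi)$ and $z(\varphi)<0$ for all $\varphi\in(0,1)$, and $z(0)=0$. A solution of $(P^{00}_c)$ is a solution of $(P_c)$ which also satisfies $z(1)=0$. $c^*$ denotes the real number such that $(P^{00}_c)$ has a solution iff $c\ge c^*$ (that solution being unique). For $c>c^*$, $\beta(c)<0$ denotes the number such that, for $b<0$, $(P_c)$ has a solution with $z(1)=b$ iff $b\ge\beta(c)$. *)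

(* Defs.v *)
From Stdlib Require Import Reals.
From Coquelicot Require Import Coquelicot.
Open Scope R_scope.

Definition cont_on_01 (g : R -> R) : Prop :=
  forall x, 0 <= x <= 1 ->
    filterlim g (within (fun y => 0 <= y <= 1) (locally x)) (locally (g x)).

Definition C1_01 (f h : R -> R) : Prop :=
  (forall x, 0 <= x <= 1 ->
     filterlim (fun y => (f y - f x) / (y - x))
       (within (fun y => 0 <= y <= 1 /\ y <> x) (locally x)) (locally (h x)))
  /\ cont_on_01 h.

Definition cond_q (q : R -> R) : Prop :=
  cont_on_01 q /\
  (forall x, 0 < x < 1 -> 0 < q x) /\
  q 0 = 0 /\ q 1 = 0 /\
  (* limsup_{phi -> 0+} q(phi)/phi < +oo *)
  (exists M delta, 0 < delta /\ forall x, 0 < x < delta -> q x / x <= M).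

Definition sol_P (h q : R -> R) (c : R) (z : R -> R) : Prop :=
  cont_on_01 z /\
  (forall x, 0 < x < 1 -> ex_derive z x /\ continuous (Derive z) x) /\
  (forall x, 0 < x < 1 -> Derive z x = h x - c - q x / z x) /\
  (forall x, 0 < x < 1 -> z x < 0) /\
  z 0 = 0.

Definition sol_P00 (h q : R -> R) (c : R) (z : R -> R) : Prop :=
  sol_P h q c z /\ z 1 = 0.

(* Main.v *)
Require Import Defs.
From Stdlib Require Import Reals Lra Lia.
From Coquelicot Require Import Coquelicot.
Open Scope R_scope.


Lemma cont_plus (f g : R -> R) x : continuous f x -> continuous g x ->
  continuous (fun y => f y + g y) x.
Proof. intros; apply (continuous_plus f g); auto. Qed.
Lemma cont_opp (f : R -> R) x : continuous f x -> continuous (fun y => - f y) x.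
Proof. intros; apply (continuous_opp f); auto. Qed.
Lemma cont_minus (f g : R -> R) x : continuous f x -> continuous g x ->
  continuous (fun y => f y - g y) x.
Proof. intros; apply cont_plus; auto; apply cont_opp; auto. Qed.
Lemma cont_mult (f g : R -> R) x : continuous f x -> continuous g x ->
  continuous (fun y => f y * g y) x.
Proof. intros; apply (continuous_mult f g); auto. Qed.
Lemma cont_const (c x : R) : continuous (fun _ : R => c) x.
Proof. apply continuous_const. Qed.
Lemma cont_id (x : R) : continuous (fun y : R => y) x.
Proof. apply continuous_id. Qed.
Lemma cont_abs (f : R -> R) x : continuous f x -> continuous (fun y => Rabs (f y)) x.
Proof. intros; apply continuous_Rabs_comp; auto. Qed.
Lemma cont_inv (f : R -> R) x : continuous f x -> f x <> 0 ->
  continuous (fun y => / f y) x.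
Proof.
  intros H Hn. apply continuity_pt_filterlim.
  apply continuity_pt_filterlim in H.
  apply (continuity_pt_comp f Rinv x H). apply continuity_pt_inv; auto.
  apply continuity_pt_id.
Qed.
Lemma cont_div (f g : R -> R) x : continuous f x -> continuous g x -> g x <> 0 ->
  continuous (fun y => f y / g y) x.
Proof. intros. unfold Rdiv. apply cont_mult; auto. apply cont_inv; auto. Qed.
Lemma cont_Rmin (f g : R -> R) x : continuous f x -> continuous g x ->
  continuous (fun y => Rmin (f y) (g y)) x.
Proof.
  intros Hf Hg.
  apply continuous_ext with (f := fun y => (f y + g y - Rabs (f y - g y)) * /2).
  { intros y. unfold Rmin. destruct (Rle_dec (f y) (g y)).
    - rewrite Rabs_left1 by lra. lra.
    - rewrite Rabs_right by lra. lra. }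
  apply cont_mult. apply cont_minus. apply cont_plus; auto. apply cont_abs, cont_minus; auto.
  apply cont_const.
Qed.
Lemma cont_Rmax (f g : R -> R) x : continuous f x -> continuous g x ->
  continuous (fun y => Rmax (f y) (g y)) x.
Proof.
  intros Hf Hg.
  apply continuous_ext with (f := fun y => (f y + g y + Rabs (f y - g y)) * /2).
  { intros y. unfold Rmax. destruct (Rle_dec (f y) (g y)).
    - rewrite Rabs_left1 by lra. lra.
    - rewrite Rabs_right by lra. lra. }
  apply cont_mult. apply cont_plus. apply cont_plus; auto. apply cont_abs, cont_minus; auto.
  apply cont_const.
Qed.

Definition clamp01 (x : R) : R := Rmax 0 (Rmin x 1).
Lemma clamp_in x : 0 <= clamp01 x <= 1.
Proof. unfold clamp01, Rmax, Rmin. repeat destruct Rle_dec; lra. Qed.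
Lemma clamp_id x : 0 <= x <= 1 -> clamp01 x = x.
Proof. intros. unfold clamp01, Rmax, Rmin. repeat destruct Rle_dec; lra. Qed.
Lemma clamp_cont x : continuous clamp01 x.
Proof.
  unfold clamp01. apply (cont_Rmax (fun _ => 0) (fun y => Rmin y 1)).
  apply cont_const. apply (cont_Rmin (fun y => y) (fun _ => 1)). apply cont_id. apply cont_const.
Qed.
Lemma cont01_clamp (g : R -> R) : cont_on_01 g -> forall x, continuous (fun y => g (clamp01 y)) x.
Proof.
  intros Hg x P HP. specialize (Hg (clamp01 x) (clamp_in x) P HP).
  unfold filtermap, within in *.
  specialize (clamp_cont x _ Hg). unfold filtermap. intros H.
  eapply filter_imp; [|exact H]. intros y Hy. simpl in Hy. apply Hy. apply clamp_in.
Qed.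


Lemma ex_RInt_pos (f : R -> R) a b : (forall x, 0 < x -> continuous f x) -> 0 < a -> 0 < b ->
  ex_RInt f a b.
Proof.
  intros Hf Ha Hb. apply (@ex_RInt_continuous R_CompleteNormedModule). intros z [H1 H2]. apply Hf.
  assert (0 < Rmin a b) by (apply Rmin_glb_lt; auto). lra.
Qed.

Lemma RInt_low_derive (f : R -> R) t : (forall x, 0 < x -> continuous f x) -> 0 < t ->
  is_derive (fun a => RInt f a 1) t (- f t).
Proof.
  intros Hf Ht. apply (is_derive_RInt' f (fun a => RInt f a 1) t 1).
  - assert (He : 0 < t/2) by lra. exists (mkposreal _ He). intros a Ha.
    apply (@RInt_correct R_CompleteNormedModule). apply ex_RInt_pos; auto. 2: lra.
    cbv [ball] in Ha; simpl in Ha; unfold AbsRing_ball, abs, minus, plus, opp in Ha; simpl in Ha.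
    apply Rabs_lt_between in Ha. lra.
  - apply Hf; auto.
Qed.

Lemma RInt_diff (f : R -> R) a b : (forall x, 0 < x -> continuous f x) -> 0 < a -> 0 < b ->
  RInt f a 1 - RInt f b 1 = RInt f a b.
Proof.
  intros Hf Ha Hb. rewrite <- (@RInt_Chasles R_CompleteNormedModule f a b 1).
  - change (plus ?x ?y) with (x + y). ring.
  - apply ex_RInt_pos; auto.
  - apply ex_RInt_pos; auto; lra.
Qed.

Lemma RInt_abs_bound (f : R -> R) M a b : (forall x, 0 < x -> continuous f x) -> 0 < a -> 0 < b ->
  (forall x, Rmin a b <= x <= Rmax a b -> Rabs (f x) <= M) -> Rabs (RInt f a b) <= M * Rabs (b - a).
Proof.
  intros Hf Ha Hb HM. destruct (Rle_dec a b) as [Hab|Hab].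
  - rewrite (Rabs_right (b - a)) by lra. rewrite Rmult_comm. apply abs_RInt_le_const; auto.
    apply ex_RInt_pos; auto. intros t Ht; apply HM. rewrite Rmin_left, Rmax_right; lra.
  - rewrite <- (@opp_RInt_swap R_CompleteNormedModule f b a). change (opp ?x) with (- x). rewrite Rabs_Ropp.
    rewrite (Rabs_left (b - a)) by lra. replace (- (b - a)) with (a - b) by ring.
    rewrite Rmult_comm. apply abs_RInt_le_const; try lra.
    apply ex_RInt_pos; auto. intros t Ht; apply HM. rewrite Rmin_right, Rmax_left; lra.
    apply ex_RInt_pos; auto.
Qed.


Definition Gf (hc qc uc : R -> R) (c s v : R) : R := hc s - c - qc s / Rmin v (uc s).

Definition PCtx (hc qc uc : R -> R) : Prop :=
  (forall x, continuous hc x) /\ (forall x, continuous qc x) /\ (forall x, continuous uc x) /\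
  (forall s, 0 < s -> uc s < 0) /\ (forall s, 0 <= qc s).

Lemma G_cont hc qc uc c (P : PCtx hc qc uc) (Y : R -> R) s : 0 < s -> continuous Y s ->
  continuous (fun x => Gf hc qc uc c x (Y x)) s.
Proof.
  destruct P as (Hh & Hq & Hu & Hneg & Hqp). intros Hs HY. unfold Gf.
  apply cont_minus. apply cont_minus; auto. apply cont_const.
  apply cont_div; auto. apply cont_Rmin; auto.
  assert (Rmin (Y s) (uc s) <= uc s) by apply Rmin_r. specialize (Hneg s Hs). lra.
Qed.

Lemma frac_le a A b B : 0 <= a <= A -> 0 < B <= b -> a / b <= A / B.
Proof.
  intros [H1 H2] [H3 H4]. unfold Rdiv. apply Rmult_le_compat; auto.
  left; apply Rinv_0_lt_compat; lra. apply Rinv_le_contravar; lra.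
Qed.

Lemma Rmin_lip v w u : Rabs (Rmin v u - Rmin w u) <= Rabs (v - w).
Proof.
  unfold Rmin; repeat destruct Rle_dec; unfold Rabs; repeat destruct Rcase_abs; lra.
Qed.

Lemma G_bounds hc qc uc c (P : PCtx hc qc uc) d : 0 < d <= 1 ->
  exists M L, 0 <= M /\ 0 < L /\ forall s, d <= s <= 2 -> forall v w,
    Rabs (Gf hc qc uc c s v) <= M /\
    Rabs (Gf hc qc uc c s v - Gf hc qc uc c s w) <= L * Rabs (v - w).
Proof.
  destruct P as (Hh & Hq & Hu & Hneg & Hqp). intros [Hd Hd2].
  destruct (continuity_ab_maj (fun s => Rabs (hc s)) d 2 ltac:(lra)
    (fun x _ => proj2 (continuity_pt_filterlim _ _) (cont_abs _ _ (Hh x)))) as [sH [HH HsH]].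
  destruct (continuity_ab_maj qc d 2 ltac:(lra)
    (fun x _ => proj2 (continuity_pt_filterlim _ _) (Hq x))) as [sQ [HQ HsQ]].
  destruct (continuity_ab_maj uc d 2 ltac:(lra)
    (fun x _ => proj2 (continuity_pt_filterlim _ _) (Hu x))) as [sU [HU HsU]].
  set (H := Rabs (hc sH)). set (Q := qc sQ). set (U := uc sU).
  assert (HU0 : U < 0) by (apply Hneg; lra).
  assert (HQ0 : 0 <= Q) by apply Hqp.
  exists (H + Rabs c + Q / (- U)), (Q / (U * U) + 1).
  split. { assert (0 <= Q / (-U)) by (unfold Rdiv; apply Rmult_le_pos; [lra| left; apply Rinv_0_lt_compat; nra]). pose proof (Rabs_pos c). pose proof (Rabs_pos (hc sH)). unfold H. lra. }
  split. { assert (0 <= Q / (U*U)) by (unfold Rdiv; apply Rmult_le_pos; [lra| left; apply Rinv_0_lt_compat; nra]). lra. }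
  intros s Hs v w.
  assert (Hm : forall v, Rmin v (uc s) <= U).
  { intros v'. pose proof (Rmin_r v' (uc s)). specialize (HU s Hs). unfold U. lra. }
  split.
  - unfold Gf. 
    assert (Rabs (qc s / Rmin v (uc s)) <= Q / (- U)).
    { rewrite Rabs_div. rewrite (Rabs_right (qc s)) by (apply Rle_ge; auto).
      rewrite (Rabs_left (Rmin v (uc s))) by (specialize (Hm v); lra).
      apply frac_le. split; auto. specialize (Hm v); lra.
      specialize (Hm v); lra. }
    specialize (HH s Hs). fold H in HH.
    unfold Rminus. eapply Rle_trans. apply Rabs_triang. rewrite Rabs_Ropp.
    eapply Rle_trans. apply Rplus_le_compat_r. apply Rabs_triang. rewrite Rabs_Ropp. lra.
  - unfold Gf. set (mv := Rmin v (uc s)). set (mw := Rmin w (uc s)).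
    assert (Hmv : mv <= U) by apply Hm. assert (Hmw : mw <= U) by apply Hm.
    replace (hc s - c - qc s / mv - (hc s - c - qc s / mw)) with (qc s * (mv - mw) / (mv * mw))
      by (field; split; lra).
    rewrite Rabs_div. rewrite Rabs_mult. rewrite (Rabs_right (qc s)) by (apply Rle_ge; auto).
    rewrite (Rabs_right (mv * mw)) by nra.
    apply Rle_trans with (Q * Rabs (v - w) / (U * U)).
    + apply frac_le. split. apply Rmult_le_pos; auto; apply Rabs_pos.
      apply Rmult_le_compat; auto. apply Rabs_pos. apply Rmin_lip.
      assert ((-U)*(-U) <= (-mv)*(-mw)) by (apply Rmult_le_compat; lra). split; nra.
    + unfold Rdiv. rewrite Rmult_assoc, (Rmult_comm (Rabs (v - w))), <- Rmult_assoc.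
      apply Rmult_le_compat_r. apply Rabs_pos. fold (Q / (U * U)). lra.
apply Rmult_integral_contrapositive_currified; lra. Qed.


Fixpoint Yit (hc qc uc : R -> R) (c y0 : R) (n : nat) : R -> R :=
  match n with
  | O => fun _ => y0
  | S m => fun t => y0 - RInt (fun s => Gf hc qc uc c s (Yit hc qc uc c y0 m s)) t 1
  end.

Lemma Yit_cont hc qc uc c y0 (P : PCtx hc qc uc) n : forall t, 0 < t -> continuous (Yit hc qc uc c y0 n) t.
Proof.
  induction n as [|n IH]; intros t Ht; simpl.
  - apply cont_const.
  - apply cont_minus. apply cont_const.
    apply (ex_derive_continuous (fun a => @RInt R_CompleteNormedModule (fun s => Gf hc qc uc c s (Yit hc qc uc c y0 n s)) a 1)). eexists.
    apply RInt_low_derive; auto. intros x Hx. apply G_cont; auto.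
Qed.

Lemma Yit_lip hc qc uc c y0 (P : PCtx hc qc uc) d M : 0 < d ->
  (forall s, d <= s <= 2 -> forall v, Rabs (Gf hc qc uc c s v) <= M) ->
  forall n s t, d <= s <= 2 -> d <= t <= 2 ->
  Rabs (Yit hc qc uc c y0 n s - Yit hc qc uc c y0 n t) <= M * Rabs (s - t).
Proof.
  intros Hd HM n s t Hs Ht. destruct n as [|n]; simpl.
  - rewrite Rminus_diag, Rabs_R0. assert (0 <= M).
    { eapply Rle_trans. apply Rabs_pos. apply (HM s Hs 0). }
    apply Rmult_le_pos; auto; apply Rabs_pos.
  - replace (y0 - RInt (fun s0 => Gf hc qc uc c s0 (Yit hc qc uc c y0 n s0)) s 1 -
       (y0 - RInt (fun s0 => Gf hc qc uc c s0 (Yit hc qc uc c y0 n s0)) t 1))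
      with (- (RInt (fun s0 => Gf hc qc uc c s0 (Yit hc qc uc c y0 n s0)) s 1 -
               RInt (fun s0 => Gf hc qc uc c s0 (Yit hc qc uc c y0 n s0)) t 1)) by ring.
    rewrite Rabs_Ropp. rewrite RInt_diff; try lra.
    rewrite (Rabs_minus_sym s t).
    apply RInt_abs_bound; try lra.
    + intros x Hx. apply G_cont; auto. apply Yit_cont; auto.
    + intros x [Hx1 Hx2]. apply HM.
      split. apply Rle_trans with (Rmin s t); auto. apply Rmin_glb; lra.
      apply Rle_trans with (Rmax s t); auto. apply Rmax_lub; lra.
    + intros x Hx. apply G_cont; auto. apply Yit_cont; auto.
Qed.

Lemma exp_int L K t : 0 < L ->
  RInt (fun s => 2 * L * K * exp (2 * L * (1 - s))) t 1 = K * exp (2 * L * (1 - t)) - K.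
Proof.
  intros HL.
  rewrite (is_RInt_unique _ t 1 (minus ((fun s => - K * exp (2 * L * (1 - s))) 1)
                                           ((fun s => - K * exp (2 * L * (1 - s))) t))).
  - change (minus ?x ?y) with (x - y). replace (1 - 1) with 0 by ring.
    replace (2 * L * 0) with 0 by ring. rewrite exp_0. rewrite Rmult_1_r. rewrite Ropp_mult_distr_l_reverse. lra.
  - apply (@is_RInt_derive R_CompleteNormedModule (fun s => - K * exp (2 * L * (1 - s)))).
    + intros x _. auto_derive. auto. match goal with |- ?a = ?b => change (@eq R a b) end. replace (1 + - x) with (1 - x) by ring. ring.
    + intros x _. apply (ex_derive_continuous (fun s => 2 * L * K * exp (2 * L * (1 - s)))).
      auto_derive; auto.
Qed.

Lemma Yit_S hc qc uc c y0 n t :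
  Yit hc qc uc c y0 (S n) t = y0 - RInt (fun s => Gf hc qc uc c s (Yit hc qc uc c y0 n s)) t 1.
Proof. reflexivity. Qed.

Lemma cont_expf L K x : continuous (fun s => 2 * L * K * exp (2 * L * (1 - s))) x.
Proof. apply (ex_derive_continuous (fun s => 2 * L * K * exp (2 * L * (1 - s)))). auto_derive; auto. Qed.

Lemma Yit_step hc qc uc c y0 (P : PCtx hc qc uc) d M L : 0 < d <= 1 -> 0 <= M -> 0 < L ->
  (forall s, d <= s <= 2 -> forall v w,
    Rabs (Gf hc qc uc c s v) <= M /\
    Rabs (Gf hc qc uc c s v - Gf hc qc uc c s w) <= L * Rabs (v - w)) ->
  forall n t, d <= t <= 1 ->
  Rabs (Yit hc qc uc c y0 (S n) t - Yit hc qc uc c y0 n t) <= M * exp (2 * L * (1 - t)) * (/2)^n.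
Proof.
  intros Hd HM HL HB n. induction n as [|n IH]; intros t Ht.
  - rewrite Yit_S. simpl Yit.
    replace (y0 - RInt (fun s => Gf hc qc uc c s y0) t 1 - y0) with (- RInt (fun s => Gf hc qc uc c s y0) t 1) by ring.
    rewrite Rabs_Ropp. eapply Rle_trans. apply RInt_abs_bound; try lra.
    + intros x Hx. apply G_cont; auto. apply cont_const.
    + intros x Hx. rewrite Rmin_left, Rmax_right in Hx by lra. apply (HB x ltac:(lra) y0 y0).
    + assert (1 <= exp (2 * L * (1 - t))) by (pose proof (exp_ineq1_le (2 * L * (1 - t))); nra).
      rewrite Rabs_right by lra. simpl. nra.
  - set (Fn := fun s => Gf hc qc uc c s (Yit hc qc uc c y0 n s)).
    set (Fn1 := fun s => Gf hc qc uc c s (Yit hc qc uc c y0 (S n) s)).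
    assert (CFn : forall x, 0 < x -> continuous Fn x).
    { intros x Hx. apply G_cont; auto. apply Yit_cont; auto. }
    assert (CFn1 : forall x, 0 < x -> continuous Fn1 x).
    { intros x Hx. apply G_cont; auto. apply Yit_cont; auto. }
    assert (E1 : Yit hc qc uc c y0 (S (S n)) t - Yit hc qc uc c y0 (S n) t
                 = RInt (fun s => Fn s - Fn1 s) t 1).
    { rewrite (Yit_S _ _ _ _ _ (S n) t), (Yit_S _ _ _ _ _ n t). fold Fn Fn1.
      transitivity (@minus R_CompleteNormedModule (RInt Fn t 1) (RInt Fn1 t 1)).
      { change (minus ?x ?y) with (x - y). ring. }
      symmetry. apply (@RInt_minus R_CompleteNormedModule Fn Fn1 t 1).
      apply ex_RInt_pos; auto; lra. apply ex_RInt_pos; auto; lra. }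
    rewrite E1.
    set (K := M * (/2) ^ (S n)).
    assert (HK : 0 <= K). { unfold K. apply Rmult_le_pos; auto. apply pow_le; lra. }
    eapply Rle_trans. apply abs_RInt_le. lra.
    { apply ex_RInt_pos; try lra. intros x Hx. apply cont_minus; auto. }
    eapply Rle_trans. apply (RInt_le _ (fun s => 2 * L * K * exp (2 * L * (1 - s)))). lra.
    { apply ex_RInt_pos; try lra. intros x Hx. apply cont_abs, cont_minus; auto. }
    { apply ex_RInt_pos; try lra. intros x Hx. apply cont_expf. }
    { intros x Hx. unfold Fn, Fn1. eapply Rle_trans. apply (HB x ltac:(lra)).
      rewrite Rabs_minus_sym. specialize (IH x ltac:(lra)).
      unfold K. simpl pow.
      assert (0 <= (/2)^n) by (apply pow_le; lra).
      assert (L * Rabs (Yit hc qc uc c y0 (S n) x - Yit hc qc uc c y0 n x) <=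
              L * (M * exp (2 * L * (1 - x)) * (/ 2) ^ n)) by (apply Rmult_le_compat_l; lra).
      lra. }
    rewrite exp_int by auto. unfold K.
    assert (0 <= M * (/2)^(S n)) by (apply Rmult_le_pos; auto; apply pow_le; lra).
    pose proof (exp_pos (2 * L * (1 - t))). nra.
Qed.


Lemma half_pow_pos n : 0 < (/2)^n.
Proof. apply pow_lt; lra. Qed.

Lemma half_pow_mono k n : (/2)^(k + n) <= (/2)^n.
Proof.
  induction k; simpl. lra. pose proof (half_pow_pos (k + n)). lra.
Qed.

Definition Bnd hc qc uc c d M L : Prop :=
  forall s, d <= s <= 2 -> forall v w,
    Rabs (Gf hc qc uc c s v) <= M /\
    Rabs (Gf hc qc uc c s v - Gf hc qc uc c s w) <= L * Rabs (v - w).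

Lemma Yit_cauchy hc qc uc c y0 (P : PCtx hc qc uc) d M L : 0 < d <= 1 -> 0 <= M -> 0 < L ->
  Bnd hc qc uc c d M L ->
  forall t, d <= t <= 1 -> forall k n,
  Rabs (Yit hc qc uc c y0 (k + n) t - Yit hc qc uc c y0 n t) <=
    2 * (M * exp (2 * L * (1 - t))) * ((/2)^n - (/2)^(k + n)).
Proof.
  intros Hd HM HL HB t Ht k n. set (C := M * exp (2 * L * (1 - t))).
  induction k as [|k IH].
  - simpl. rewrite Rminus_diag, Rabs_R0. lra.
  - change (S k + n)%nat with (S (k + n)).
    pose proof (Yit_step hc qc uc c y0 P d M L Hd HM HL HB (k + n) t Ht) as H1. fold C in H1.
    eapply Rle_trans. 
    replace (Yit hc qc uc c y0 (S (k + n)) t - Yit hc qc uc c y0 n t) with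
      ((Yit hc qc uc c y0 (S (k + n)) t - Yit hc qc uc c y0 (k + n) t) +
       (Yit hc qc uc c y0 (k + n) t - Yit hc qc uc c y0 n t)) by ring.
    apply Rabs_triang. simpl pow. lra.
Qed.

Definition ylim hc qc uc c y0 (t : R) : R :=
  Lim_seq (fun n => Yit hc qc uc c y0 n (Rmin t 1)).

Lemma ylim_conv hc qc uc c y0 (P : PCtx hc qc uc) d M L : 0 < d <= 1 -> 0 <= M -> 0 < L ->
  Bnd hc qc uc c d M L ->
  forall t, d <= t <= 1 ->
  is_lim_seq (fun n => Yit hc qc uc c y0 n t) (ylim hc qc uc c y0 t) /\
  forall n, Rabs (ylim hc qc uc c y0 t - Yit hc qc uc c y0 n t) <=
            2 * (M * exp (2 * L * (1 - t))) * (/2)^n.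
Proof.
  intros Hd HM HL HB t Ht.
  pose proof (Yit_cauchy hc qc uc c y0 P d M L Hd HM HL HB t Ht) as HC.
  set (C := M * exp (2 * L * (1 - t))) in *.
  assert (HC0 : 0 <= C) by (unfold C; pose proof (exp_pos (2 * L * (1 - t))); nra).
  assert (HC' : forall k n, Rabs (Yit hc qc uc c y0 (k + n) t - Yit hc qc uc c y0 n t) <= 2 * C * (/2)^n).
  { intros k n. eapply Rle_trans. apply HC. pose proof (half_pow_pos (k + n)). nra. }
  assert (Hlim : is_lim_seq (fun n => Yit hc qc uc c y0 n t) (ylim hc qc uc c y0 t)).
  { unfold ylim. rewrite Rmin_left by lra.
    apply Lim_seq_correct'. apply ex_lim_seq_cauchy_corr. intros eps.
    destruct (pow_lt_1_zero (/2) ltac:(rewrite Rabs_right; lra) (eps / (2 * C + 1)))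
      as [N HN].
    { apply Rdiv_lt_0_compat. apply cond_pos. lra. }
    exists N. intros n m Hn Hm.
    assert (HNb : forall j, (j >= N)%nat -> 2 * C * (/2)^j < eps).
    { intros j Hj. specialize (HN j Hj). rewrite Rabs_right in HN by (left; apply half_pow_pos).
      pose proof (cond_pos eps). pose proof (half_pow_pos j).
      apply Rmult_lt_compat_r with (r := 2 * C + 1) in HN; [|lra].
      unfold Rdiv in HN. rewrite Rmult_assoc, Rinv_l in HN by lra. nra. }
    destruct (Nat.le_ge_cases n m) as [Hnm|Hnm].
    - destruct (Nat.le_exists_sub n m Hnm) as [k [-> _]].
      rewrite Rabs_minus_sym. eapply Rle_lt_trans. apply HC'. apply HNb; auto.
    - destruct (Nat.le_exists_sub m n Hnm) as [k [-> _]].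
      eapply Rle_lt_trans. apply HC'. apply HNb; auto. }
  split; auto.
  intros n.
  assert (H1 : is_lim_seq (fun k => Rabs (Yit hc qc uc c y0 (k + n) t - Yit hc qc uc c y0 n t))
                 (Rabs (ylim hc qc uc c y0 t - Yit hc qc uc c y0 n t))).
  { apply (is_lim_seq_abs _ (Finite (ylim hc qc uc c y0 t - Yit hc qc uc c y0 n t))).
    apply (is_lim_seq_minus' _ (fun _ => Yit hc qc uc c y0 n t)).
    apply (is_lim_seq_incr_n (fun k => Yit hc qc uc c y0 k t) n). auto.
    apply is_lim_seq_const. }
  pose proof (is_lim_seq_le _ _ _ _ (fun k => HC' k n) H1 (is_lim_seq_const (2 * C * (/2)^n))) as H2.
  simpl in H2. exact H2.
Qed.


Lemma geom_conv (u : nat -> R) l K : (forall n, Rabs (u n - l) <= K * (/2)^n) -> is_lim_seq u l.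
Proof.
  intros H.
  assert (Hg : is_lim_seq (fun n => K * (/2)^n) 0).
  { replace 0 with (K * 0) by ring. apply (is_lim_seq_scal_l _ K 0). apply is_lim_seq_geom.
    rewrite Rabs_right; lra. }
  apply (is_lim_seq_le_le (fun n => l - K * (/2)^n) u (fun n => l + K * (/2)^n)).
  - intros n. specialize (H n). apply Rabs_le_between in H. lra.
  - replace (Finite l) with (Finite (l - 0)) by (f_equal; ring).
    apply is_lim_seq_minus'. apply is_lim_seq_const. auto.
  - replace (Finite l) with (Finite (l + 0)) by (f_equal; ring).
    apply is_lim_seq_plus'. apply is_lim_seq_const. auto.
Qed.

Lemma lip_cont (f : R -> R) d M t : 0 <= M -> d < t ->
  (forall a b, d <= a -> d <= b -> Rabs (f a - f b) <= M * Rabs (a - b)) -> continuous f t.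
Proof.
  intros HM Ht Hl. apply filterlim_locally. intros eps.
  assert (Hp : 0 < Rmin (t - d) (eps / (M + 1))).
  { apply Rmin_glb_lt. lra. apply Rdiv_lt_0_compat. apply cond_pos. lra. }
  exists (mkposreal _ Hp). intros y Hy.
  cbv [ball] in Hy |- *; simpl in Hy |- *; unfold AbsRing_ball, abs, minus, plus, opp in Hy |- *; simpl in Hy |- *.
  fold (y - t) in Hy. fold (f y - f t).
  assert (H1 : Rabs (y - t) < t - d) by (eapply Rlt_le_trans; [exact Hy| apply Rmin_l]).
  assert (H2 : Rabs (y - t) < eps / (M + 1)) by (eapply Rlt_le_trans; [exact Hy| apply Rmin_r]).
  apply Rabs_lt_between in H1.
  eapply Rle_lt_trans. apply Hl; lra.
  pose proof (cond_pos eps). pose proof (Rabs_pos (y - t)).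
  apply Rmult_lt_compat_r with (r := M + 1) in H2; [|lra].
  unfold Rdiv in H2. rewrite Rmult_assoc, Rinv_l in H2 by lra. nra.
Qed.

Lemma ylim_min hc qc uc c y0 a : ylim hc qc uc c y0 (Rmin a 1) = ylim hc qc uc c y0 a.
Proof.
  unfold ylim. f_equal. apply Lim_seq_ext. intros n. f_equal.
  unfold Rmin at 1. destruct Rle_dec; auto. unfold Rmin in *; destruct Rle_dec; lra.
Qed.

Lemma ylim_lip hc qc uc c y0 (P : PCtx hc qc uc) d M L : 0 < d <= 1 -> 0 <= M -> 0 < L ->
  Bnd hc qc uc c d M L ->
  forall a b, d <= a -> d <= b ->
  Rabs (ylim hc qc uc c y0 a - ylim hc qc uc c y0 b) <= M * Rabs (a - b).
Proof.
  intros Hd HM HL HB a b Ha Hb.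
  rewrite <- (ylim_min _ _ _ _ _ a), <- (ylim_min _ _ _ _ _ b).
  assert (Ha' : d <= Rmin a 1 <= 1) by (split; [apply Rmin_glb; lra | apply Rmin_r]).
  assert (Hb' : d <= Rmin b 1 <= 1) by (split; [apply Rmin_glb; lra | apply Rmin_r]).
  destruct (ylim_conv hc qc uc c y0 P d M L Hd HM HL HB _ Ha') as [Ca _].
  destruct (ylim_conv hc qc uc c y0 P d M L Hd HM HL HB _ Hb') as [Cb _].
  assert (H1 := is_lim_seq_abs _ _ (is_lim_seq_minus' _ _ _ _ Ca Cb)).
  assert (Hl : forall n, Rabs (Yit hc qc uc c y0 n (Rmin a 1) - Yit hc qc uc c y0 n (Rmin b 1))
                   <= M * Rabs (Rmin a 1 - Rmin b 1)).
  { intros n. apply (Yit_lip hc qc uc c y0 P d M); try lra.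
    intros s Hs v. apply (HB s Hs v v). }
  pose proof (is_lim_seq_le _ _ _ _ Hl H1 (is_lim_seq_const _)) as H2. simpl in H2.
  eapply Rle_trans. exact H2. apply Rmult_le_compat_l; auto. apply Rmin_lip.
Qed.

Lemma ylim_cont hc qc uc c y0 (P : PCtx hc qc uc) t : 0 < t -> continuous (ylim hc qc uc c y0) t.
Proof.
  intros Ht. set (d := Rmin (t/2) 1).
  assert (Hd : 0 < d <= 1) by (split; [apply Rmin_glb_lt; lra| apply Rmin_r]).
  destruct (G_bounds hc qc uc c P d Hd) as (M & L & HM & HL & HB).
  apply (lip_cont _ d M); auto.
  assert (d <= t/2) by apply Rmin_l. lra.
  apply (ylim_lip hc qc uc c y0 P d M L); auto.
Qed.

Lemma exp_mono a b : a <= b -> exp a <= exp b.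
Proof. intros H. destruct (Req_dec a b). subst; lra. left; apply exp_increasing; lra. Qed.

Lemma ylim_int hc qc uc c y0 (P : PCtx hc qc uc) t : 0 < t <= 1 ->
  ylim hc qc uc c y0 t = y0 - RInt (fun s => Gf hc qc uc c s (ylim hc qc uc c y0 s)) t 1.
Proof.
  intros Ht.
  destruct (G_bounds hc qc uc c P t Ht) as (M & L & HM & HL & HB).
  destruct (ylim_conv hc qc uc c y0 P t M L Ht HM HL HB t ltac:(lra)) as [Hc Hb].
  set (Fy := fun s => Gf hc qc uc c s (ylim hc qc uc c y0 s)).
  assert (CFy : forall x, 0 < x -> continuous Fy x).
  { intros x Hx. apply G_cont; auto. apply ylim_cont; auto. }
  set (C := M * exp (2 * L * (1 - t))).
  assert (Hg : is_lim_seq (fun n => Yit hc qc uc c y0 (S n) t) (y0 - RInt Fy t 1)).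
  { apply (geom_conv _ _ ((1 - t) * (L * (2 * C)))). intros n.
    set (Fn := fun s => Gf hc qc uc c s (Yit hc qc uc c y0 n s)).
    assert (CFn : forall x, 0 < x -> continuous Fn x).
    { intros x Hx. apply G_cont; auto. apply Yit_cont; auto. }
    rewrite Yit_S. fold Fn.
    replace (y0 - RInt Fn t 1 - (y0 - RInt Fy t 1)) with (RInt Fy t 1 - RInt Fn t 1) by ring.
    assert (E1 : RInt Fy t 1 - RInt Fn t 1 = RInt (fun s => Fy s - Fn s) t 1).
    { transitivity (@minus R_CompleteNormedModule (RInt Fy t 1) (RInt Fn t 1)).
      { change (minus ?x ?y) with (x - y). ring. }
      symmetry. apply (@RInt_minus R_CompleteNormedModule Fy Fn t 1).
      apply ex_RInt_pos; auto; lra. apply ex_RInt_pos; auto; lra. }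
    rewrite E1.
    eapply Rle_trans. apply (RInt_abs_bound _ (L * (2 * C * (/2)^n))); try lra.
    { intros x Hx. apply cont_minus; auto. }
    { intros x Hx. rewrite Rmin_left, Rmax_right in Hx by lra.
      unfold Fy, Fn. eapply Rle_trans. apply (HB x ltac:(lra)).
      apply Rmult_le_compat_l. lra.
      destruct (ylim_conv hc qc uc c y0 P t M L Ht HM HL HB x ltac:(lra)) as [_ Hx2].
      eapply Rle_trans. apply Hx2.
      pose proof (half_pow_pos n).
      assert (exp (2 * L * (1 - x)) <= exp (2 * L * (1 - t))) by (apply exp_mono; nra).
      unfold C. apply Rmult_le_compat_r. lra. nra. }
    rewrite Rabs_right by lra. right; ring. }
  apply is_lim_seq_incr_1 in Hc.
  pose proof (is_lim_seq_unique _ _ Hc) as U1. rewrite (is_lim_seq_unique _ _ Hg) in U1.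
  injection U1. auto.
Qed.

Lemma ylim_derive hc qc uc c y0 (P : PCtx hc qc uc) t : 0 < t < 1 ->
  is_derive (ylim hc qc uc c y0) t (Gf hc qc uc c t (ylim hc qc uc c y0 t)).
Proof.
  intros Ht.
  set (Fy := fun s => Gf hc qc uc c s (ylim hc qc uc c y0 s)).
  assert (CFy : forall x, 0 < x -> continuous Fy x).
  { intros x Hx. apply G_cont; auto. apply ylim_cont; auto. }
  apply (is_derive_ext_loc (fun x => y0 - RInt Fy x 1)).
  { assert (Hp : 0 < Rmin t (1 - t)) by (apply Rmin_glb_lt; lra).
    exists (mkposreal _ Hp). intros x Hx.
    cbv [ball] in Hx; simpl in Hx; unfold AbsRing_ball, abs, minus, plus, opp in Hx; simpl in Hx.
    assert (H1 : Rabs (x + - t) < t) by (eapply Rlt_le_trans; [exact Hx| apply Rmin_l]).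
    assert (H2 : Rabs (x + - t) < 1 - t) by (eapply Rlt_le_trans; [exact Hx| apply Rmin_r]).
    apply Rabs_lt_between in H1. apply Rabs_lt_between in H2.
    symmetry. apply ylim_int; auto. lra. }
  pose proof (RInt_low_derive Fy t CFy ltac:(lra)) as D1.
  pose proof (is_derive_minus (fun _ => y0) _ t _ _ (is_derive_const y0 t) D1) as D2.
  simpl in D2. change (minus ?x ?y) with (x - y) in D2.
  replace (Gf hc qc uc c t (ylim hc qc uc c y0 t)) with (zero - - Fy t). exact D2.
  change zero with 0. unfold Fy. ring.
Qed.


Lemma cont_eps (g : R -> R) x : continuous g x -> forall eps, 0 < eps ->
  exists del, 0 < del /\ forall y, Rabs (y - x) < del -> Rabs (g y - g x) < eps.
Proof.
  intros Hc eps He. assert (Hc2 := proj1 (@filterlim_locally R_UniformSpace R_UniformSpace (locally x) _ g (g x)) Hc). destruct (Hc2 (mkposreal _ He)) as [del Hd].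
  exists del. split. apply cond_pos. intros y Hy. apply (Hd y). exact Hy.
Qed.

Lemma persist (g : R -> R) a b : a < b -> 0 < g a ->
  (forall x, a <= x < b -> exists dg, is_derive g x dg /\ (0 < g x -> 0 <= dg)) ->
  (forall eps, 0 < eps -> exists eta, 0 < eta /\ forall x, b - eta < x <= b -> Rabs (g x - g b) < eps) ->
  g a <= g b.
Proof.
  intros Hab Hga Hd0 Hlc.
  assert (Hd : forall x, a <= x < b -> ex_derive g x /\ (0 < g x -> 0 <= Derive g x)).
  { intros x Hx. destruct (Hd0 x Hx) as [dg [Hdg Hp]]. split. exists dg; auto.
    rewrite (is_derive_unique _ _ _ Hdg). auto. }
  clear Hd0. set (m := g a).
  set (E := fun x => a <= x <= b /\ forall s, a <= s <= x -> m <= g s).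
  assert (Ea : E a). { split. lra. intros s Hs. replace s with a by lra. unfold m; lra. }
  assert (Hbd : bound E). { exists b. intros x [Hx _]. lra. }
  destruct (completeness E Hbd (ex_intro _ a Ea)) as [s0 [Hub Hlub]].
  assert (Ha0 : a <= s0) by (apply Hub; auto).
  assert (Hb0 : s0 <= b) by (apply Hlub; intros x [Hx _]; lra).
  assert (C1 : forall s, a <= s < s0 -> m <= g s).
  { intros s Hs. destruct (Rle_dec m (g s)) as [H|H]; auto. exfalso.
    assert (Hs0 : s0 <= s).
    { apply Hlub. intros x Ex. destruct (Rle_dec x s) as [H1|H1]; auto. exfalso.
      destruct Ex as [_ Ex]. apply H, Ex. lra. }
    lra. }
  assert (Hcont : forall x, a <= x < b -> continuous g x).
  { intros x Hx. apply (@ex_derive_continuous R_AbsRing R_NormedModule g). apply Hd; auto. }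
  destruct (Req_dec s0 b) as [Hsb|Hsb].
  - destruct (Rle_dec m (g b)) as [H|H]; [unfold m in H; exact H|].
    exfalso. destruct (Hlc (m - g b) ltac:(lra)) as [eta [Heta Hx]].
    set (s := Rmax a (b - eta/2)).
    assert (Hs1 : a <= s) by apply Rmax_l.
    assert (Hs2 : b - eta/2 <= s) by apply Rmax_r.
    assert (Hs3 : s < b) by (unfold s, Rmax; destruct Rle_dec; lra).
    specialize (Hx s ltac:(lra)). specialize (C1 s ltac:(lra)).
    apply Rabs_lt_between in Hx. lra.
  - assert (C2 : m <= g s0).
    { destruct (Req_dec s0 a) as [Hsa|Hsa]. { rewrite Hsa. unfold m; lra. }
      destruct (Rle_dec m (g s0)) as [H|H]; auto. exfalso.
      destruct (cont_eps g s0 (Hcont s0 ltac:(lra)) (m - g s0) ltac:(lra)) as [del [Hdel Hx]].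
      set (s := Rmax a (s0 - del/2)).
      assert (Hs1 : a <= s) by apply Rmax_l.
      assert (Hs2 : s0 - del/2 <= s) by apply Rmax_r.
      assert (Hs3 : s < s0) by (unfold s, Rmax; destruct Rle_dec; lra).
      specialize (Hx s). rewrite Rabs_left in Hx by lra. specialize (Hx ltac:(lra)).
      specialize (C1 s ltac:(lra)). apply Rabs_lt_between in Hx. lra. }
    exfalso.
    destruct (cont_eps g s0 (Hcont s0 ltac:(lra)) (g s0) ltac:(unfold m in C2; lra)) as [del [Hdel Hx]].
    set (x1 := Rmin (s0 + del/2) ((s0 + b)/2)).
    assert (Hx1a : x1 <= s0 + del/2) by apply Rmin_l.
    assert (Hx1b : x1 <= (s0 + b)/2) by apply Rmin_r.
    assert (Hx1c : s0 < x1) by (unfold x1, Rmin; destruct Rle_dec; lra).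
    assert (Ex1 : E x1).
    { split. lra. intros s Hs.
      destruct (Rlt_le_dec s s0) as [H1|H1]. apply C1; lra.
      destruct (Req_dec s s0) as [H2|H2]. subst; auto.
      assert (Hpos : forall y, s0 <= y <= s -> 0 < g y).
      { intros y Hy. specialize (Hx y). rewrite Rabs_right in Hx by lra.
        specialize (Hx ltac:(lra)). apply Rabs_lt_between in Hx. lra. }
      destruct (MVT_gen g s0 s (Derive g)) as [c0 [Hc0 Heq]].
      { intros y Hy. rewrite Rmin_left, Rmax_right in Hy by lra.
        apply Derive_correct. apply Hd; lra. }
      { intros y Hy. rewrite Rmin_left, Rmax_right in Hy by lra.
        apply continuity_pt_filterlim. apply Hcont. lra. }
      rewrite Rmin_left, Rmax_right in Hc0 by lra.
      assert (0 <= Derive g c0) by (apply Hd; [lra| apply Hpos; lra]).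
      assert (0 <= Derive g c0 * (s - s0)) by (apply Rmult_le_pos; lra).
      lra. }
    specialize (Hub x1 Ex1). lra.
Qed.


Theorem picard hc qc uc c y0 (P : PCtx hc qc uc) : exists y : R -> R,
  (forall t, 0 < t -> continuous y t) /\
  (forall t, 0 < t < 1 -> is_derive y t (Gf hc qc uc c t (y t))) /\ y 1 = y0.
Proof.
  exists (ylim hc qc uc c y0). split; [|split].
  - intros t Ht. apply ylim_cont; auto.
  - intros t Ht. apply ylim_derive; auto.
  - rewrite ylim_int by (auto; lra). rewrite RInt_point. change zero with 0. ring.
Qed.

Lemma within_eps (g : R -> R) (D : R -> Prop) x :
  filterlim g (within D (locally x)) (locally (g x)) ->
  forall eps, 0 < eps -> exists del, 0 < del /\ forall s, D s -> Rabs (s - x) < del -> Rabs (g s - g x) < eps.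
Proof.
  intros H eps He. destruct (H (ball (g x) (mkposreal _ He)) (locally_ball _ _)) as [del Hd].
  exists del. split. apply cond_pos. intros s Ds Hs. apply (Hd s). exact Hs. exact Ds.
Qed.

Lemma eps_within (g : R -> R) (D : R -> Prop) x l :
  (forall eps, 0 < eps -> exists del, 0 < del /\ forall s, D s -> Rabs (s - x) < del -> Rabs (g s - l) < eps) ->
  filterlim g (within D (locally x)) (locally l).
Proof.
  intros H. intros P [eps HP]. destruct (H eps (cond_pos eps)) as [del [Hdel Hs]].
  exists (mkposreal _ Hdel). intros s Hsx Ds. apply HP. apply (Hs s Ds). exact Hsx.
Qed.

Lemma locally_int a b x : a < x < b -> locally x (fun t => a < t < b).
Proof.
  intros Hx. assert (Hp : 0 < Rmin (x - a) (b - x)) by (apply Rmin_glb_lt; lra).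
  exists (mkposreal _ Hp). intros t Ht.
  cbv [ball] in Ht; simpl in Ht; unfold AbsRing_ball, abs, minus, plus, opp in Ht; simpl in Ht.
  assert (H1 : Rabs (t + - x) < x - a) by (eapply Rlt_le_trans; [exact Ht| apply Rmin_l]).
  assert (H2 : Rabs (t + - x) < b - x) by (eapply Rlt_le_trans; [exact Ht| apply Rmin_r]).
  apply Rabs_lt_between in H1. apply Rabs_lt_between in H2. lra.
Qed.

Definition zext (y : R -> R) (x : R) : R := if Rle_dec x 0 then 0 else y x.

Lemma zext_loc y x : 0 < x -> locally x (fun t => y t = zext y t).
Proof.
  intros Hx. apply filter_imp with (fun t => x / 2 < t < x + 1).
  { intros t Ht. unfold zext. destruct Rle_dec; auto. lra. }
  apply locally_int. lra.
Qed.

Lemma build_sol h q c' (y Dy u w : R -> R) y0 :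
  (forall t, 0 < t -> continuous y t) ->
  (forall t, 0 < t < 1 -> is_derive y t (Dy t)) ->
  (forall t, 0 < t < 1 -> continuous Dy t) ->
  (forall t, 0 < t < 1 -> Dy t = h t - c' - q t / y t) ->
  y 1 = y0 -> cont_on_01 u -> u 0 = 0 -> cont_on_01 w -> w 0 = 0 ->
  (forall t, 0 < t <= 1 -> w t <= y t <= u t) -> (forall t, 0 < t < 1 -> u t < 0) ->
  exists z, sol_P h q c' z /\ z 1 = y0.
Proof.
  intros Hyc HyD HDc HDeq Hy1 Hu Hu0 Hw Hw0 Hwyu Hun.
  exists (zext y). split; [|unfold zext; destruct Rle_dec; [lra|auto]].
  assert (HD : forall x, 0 < x < 1 -> is_derive (zext y) x (Dy x)).
  { intros x Hx. apply (is_derive_ext_loc y). apply zext_loc; lra. apply HyD; auto. }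
  split; [|split; [|split; [|split]]].
  - intros x Hx. destruct (Req_dec x 0) as [Hx0|Hx0].
    + subst x. replace (zext y 0) with 0 by (unfold zext; destruct Rle_dec; lra).
      apply eps_within. intros eps He.
      destruct (within_eps u _ 0 (Hu 0 ltac:(lra)) eps He) as [d1 [Hd1 H1]].
      destruct (within_eps w _ 0 (Hw 0 ltac:(lra)) eps He) as [d2 [Hd2 H2]].
      exists (Rmin d1 d2). split. apply Rmin_glb_lt; auto.
      intros s Ds Hs. unfold zext. destruct Rle_dec. rewrite Rminus_diag, Rabs_R0; auto.
      assert (Hs1 : Rabs (s - 0) < d1) by (eapply Rlt_le_trans; [exact Hs| apply Rmin_l]).
      assert (Hs2 : Rabs (s - 0) < d2) by (eapply Rlt_le_trans; [exact Hs| apply Rmin_r]).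
      specialize (H1 s Ds Hs1). specialize (H2 s Ds Hs2). rewrite Hu0 in H1. rewrite Hw0 in H2.
      specialize (Hwyu s ltac:(lra)).
      apply Rabs_lt_between in H1. apply Rabs_lt_between in H2. apply Rabs_lt_between. lra.
    + assert (Hxp : 0 < x) by lra.
      assert (Hc : continuous (zext y) x).
      { apply (continuous_ext_loc _ y). apply zext_loc; auto. apply Hyc; auto. }
      apply eps_within. intros eps He. destruct (cont_eps _ x Hc eps He) as [d [Hd Hs]].
      exists d. split; auto.
  - intros x Hx. split. exists (Dy x). apply HD; auto.
    apply (continuous_ext_loc _ Dy). 2: apply HDc; auto.
    apply filter_imp with (fun t => 0 < t < 1). 2: apply locally_int; auto.
    intros t Ht. symmetry. apply is_derive_unique. apply HD; auto.
  - intros x Hx. rewrite (is_derive_unique _ _ _ (HD x Hx)). rewrite HDeq by auto.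
    unfold zext. destruct Rle_dec; [lra|auto].
  - intros x Hx. unfold zext. destruct Rle_dec; [lra|].
    specialize (Hwyu x ltac:(lra)). specialize (Hun x Hx). lra.
  - unfold zext. destruct Rle_dec; lra.
Qed.

Lemma cont_within (g : R -> R) (D : R -> Prop) x : continuous g x ->
  filterlim g (within D (locally x)) (locally (g x)).
Proof.
  intros Hc. apply eps_within. intros eps He. destruct (cont_eps g x Hc eps He) as [d [Hd Hs]].
  exists d. split; auto.
Qed.

Lemma lc1 (p r : R -> R) :
  filterlim p (within (fun y => 0 <= y <= 1) (locally 1)) (locally (p 1)) ->
  filterlim r (within (fun y => 0 <= y <= 1) (locally 1)) (locally (r 1)) ->
  forall eps, 0 < eps -> exists eta, 0 < eta /\
    forall x, 1 - eta < x <= 1 -> Rabs ((p x - r x) - (p 1 - r 1)) < eps.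
Proof.
  intros Hp Hr eps He.
  destruct (within_eps p _ 1 Hp (eps/2) ltac:(lra)) as [d1 [Hd1 H1]].
  destruct (within_eps r _ 1 Hr (eps/2) ltac:(lra)) as [d2 [Hd2 H2]].
  exists (Rmin 1 (Rmin d1 d2)). split. repeat apply Rmin_glb_lt; lra.
  intros x Hx.
  assert (Rmin 1 (Rmin d1 d2) <= 1) by apply Rmin_l.
  assert (Rmin 1 (Rmin d1 d2) <= Rmin d1 d2) by apply Rmin_r.
  assert (Rmin d1 d2 <= d1) by apply Rmin_l. assert (Rmin d1 d2 <= d2) by apply Rmin_r.
  assert (Hxa : Rabs (x - 1) < d1) by (rewrite Rabs_left1 by lra; lra).
  assert (Hxb : Rabs (x - 1) < d2) by (rewrite Rabs_left1 by lra; lra).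
  specialize (H1 x ltac:(lra) Hxa). specialize (H2 x ltac:(lra) Hxb).
  apply Rabs_lt_between in H1. apply Rabs_lt_between in H2. apply Rabs_lt_between. lra.
Qed.

Lemma cont01_lin (z : R -> R) k : cont_on_01 z -> cont_on_01 (fun x => z x - k * x).
Proof.
  intros Hz x Hx. apply eps_within. intros eps He.
  destruct (within_eps z _ x (Hz x Hx) (eps/2) ltac:(lra)) as [d1 [Hd1 H1]].
  assert (Hp : 0 < eps / 2 / (Rabs k + 1)).
  { apply Rdiv_lt_0_compat. lra. pose proof (Rabs_pos k). lra. }
  exists (Rmin d1 (eps / 2 / (Rabs k + 1))). split. apply Rmin_glb_lt; auto.
  intros s Ds Hs.
  assert (Hs1 : Rabs (s - x) < d1) by (eapply Rlt_le_trans; [exact Hs| apply Rmin_l]).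
  assert (Hs2 : Rabs (s - x) < eps / 2 / (Rabs k + 1)) by (eapply Rlt_le_trans; [exact Hs| apply Rmin_r]).
  specialize (H1 s Ds Hs1).
  replace (z s - k * s - (z x - k * x)) with ((z s - z x) - k * (s - x)) by ring.
  eapply Rle_lt_trans. unfold Rminus at 1. apply Rabs_triang. rewrite Rabs_Ropp, Rabs_mult.
  assert (Rabs k * Rabs (s - x) < eps / 2).
  { pose proof (Rabs_pos k). pose proof (Rabs_pos (s - x)).
    apply Rmult_lt_compat_r with (r := Rabs k + 1) in Hs2; [|lra].
    unfold Rdiv in Hs2. rewrite (Rmult_assoc (eps * / 2)), Rinv_l in Hs2 by lra. nra. }
  lra.
Qed.

Lemma der_minus (f g : R -> R) x a b : is_derive f x a -> is_derive g x b ->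
  is_derive (fun t => f t - g t) x (a - b).
Proof. intros Ha Hb. apply (is_derive_minus f g x a b Ha Hb). Qed.


Lemma key (f h q : R -> R) (cstar : R) (beta : R -> R)
  (Hf : C1_01 f h) (Hq : cond_q q)
  (Hbeta : forall c, c > cstar ->
     beta c < 0 /\
     (forall b, b < 0 -> ((exists z, sol_P h q c z /\ z 1 = b) <-> b >= beta c)))
  c c' : cstar < c -> c < c' -> beta c' <= beta c - (c' - c).
Proof.
  intros Hc0 Hcc. set (y0 := beta c - (c' - c)).
  destruct (Rle_dec (beta c') y0) as [H|Hlt]; auto. exfalso. apply Rnot_le_lt in Hlt.
  destruct (Hbeta c ltac:(lra)) as [Hbc Hc]. destruct (Hbeta c' ltac:(lra)) as [Hbc' Hc'].
  destruct (proj2 (Hc (beta c) Hbc) ltac:(lra)) as [z1 [Hz1 Hz11]].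
  destruct (proj2 (Hc' (beta c') Hbc') ltac:(lra)) as [u [Hu Hu1]].
  destruct Hz1 as (Z1c & Z1d & Z1e & Z1n & Z10). destruct Hu as (Uc & Ud & Ue & Un & U0).
  destruct Hf as [_ Hhc]. destruct Hq as (Hqc & Hqp & Hq0 & Hq1 & _).
  assert (Hqnn : forall s, 0 <= s <= 1 -> 0 <= q s).
  { intros s Hs. destruct (Req_dec s 0). subst; lra. destruct (Req_dec s 1). subst; lra.
    left; apply Hqp; lra. }
  set (hc := fun s => h (clamp01 s)). set (qc := fun s => q (clamp01 s)).
  set (uc := fun s => u (clamp01 s)).
  assert (P : PCtx hc qc uc).
  { split; [|split; [|split; [|split]]].
    - apply cont01_clamp; auto.
    - apply cont01_clamp; auto.
    - apply cont01_clamp; auto.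
    - intros s Hs. unfold uc. pose proof (clamp_in s).
      assert (0 < clamp01 s).
      { unfold clamp01, Rmax, Rmin. repeat destruct Rle_dec; lra. }
      destruct (Req_dec (clamp01 s) 1) as [E|E]. rewrite E, Hu1; auto. apply Un; lra.
    - intros s. unfold qc. apply Hqnn, clamp_in. }
  assert (Eh : forall t, 0 <= t <= 1 -> hc t = h t) by (intros; unfold hc; rewrite clamp_id; auto).
  assert (Eq : forall t, 0 <= t <= 1 -> qc t = q t) by (intros; unfold qc; rewrite clamp_id; auto).
  assert (Eu : forall t, 0 <= t <= 1 -> uc t = u t) by (intros; unfold uc; rewrite clamp_id; auto).
  destruct (picard hc qc uc c' y0 P) as [y [Hyc [HyD Hy1]]].
  set (Dy := fun t => Gf hc qc uc c' t (y t)).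
  assert (HA : forall t, 0 < t <= 1 -> y t <= u t).
  { intros t Ht. destruct (Rle_dec (y t) (u t)) as [H|H]; auto. exfalso.
    destruct (Req_dec t 1) as [E|E]. { subst t. lra. }
    assert (Hp := persist (fun x => y x - u x) t 1 ltac:(lra) ltac:(lra)).
    assert (1 <= 1) by lra.
    assert (y t - u t <= y 1 - u 1).
    { apply Hp.
      - intros x Hx.
        assert (Dg : is_derive (fun x => y x - u x) x (Dy x - Derive u x)).
        { apply der_minus. apply HyD; lra. apply Derive_correct. apply Ud; lra. }
        eexists. split. exact Dg.
        intros Hg. rewrite Ue by lra.
        unfold Dy, Gf. rewrite Eh, Eq, Eu by lra. rewrite Rmin_right by lra. lra.
      - apply lc1. apply cont_within, Hyc; lra. apply Uc; lra. }
    lra. }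
  set (w := fun x => z1 x - (c' - c) * x).
  assert (HB : forall t, 0 < t <= 1 -> w t <= y t).
  { intros t Ht. destruct (Rle_dec (w t) (y t)) as [H|H]; auto. exfalso.
    destruct (Req_dec t 1) as [E|E]. { subst t. unfold w in H. rewrite Hz11, Hy1 in H. unfold y0 in H. lra. }
    assert (Hp := persist (fun x => w x - y x) t 1 ltac:(lra) ltac:(lra)).
    assert (w t - y t <= w 1 - y 1).
    { apply Hp.
      - intros x Hx.
        assert (Dw : is_derive w x (Derive z1 x - (c' - c))).
        { assert (Dl : is_derive (fun x => (c' - c) * x) x (c' - c)) by (auto_derive; auto; ring).
          unfold w. apply der_minus; auto.
          apply Derive_correct. apply Z1d; lra. }
        assert (Dg : is_derive (fun x => w x - y x) x (Derive z1 x - (c' - c) - Dy x)).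
        { apply der_minus; auto. apply HyD; lra. }
        eexists. split. exact Dg.
        intros Hg. rewrite Z1e by lra.
        unfold Dy, Gf. rewrite Eh, Eq, Eu by lra.
        set (m := Rmin (y x) (u x)).
        assert (Hm : m <= y x) by apply Rmin_l.
        assert (Hz : z1 x < 0) by (apply Z1n; lra).
        assert (Hwz : w x < z1 x) by (unfold w; nra).
        assert (Hq' : 0 <= q x) by (apply Hqnn; lra).
        replace (h x - c - q x / z1 x - (c' - c) - (h x - c' - q x / m))
          with (q x * (z1 x - m) * / (m * z1 x)) by (field; split; lra).
        apply Rmult_le_pos. apply Rmult_le_pos; lra. left. apply Rinv_0_lt_compat. nra.
      - apply lc1. apply cont01_lin; auto; lra. apply cont_within, Hyc; lra. }
    unfold w in H0 at 2. rewrite Hz11, Hy1 in H0. unfold y0 in H0. lra. }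
  assert (Hy0 : y0 < 0) by (unfold y0; lra).
  assert (HDc : forall t, 0 < t < 1 -> continuous Dy t).
  { intros t Ht. apply G_cont; auto. lra. apply Hyc; lra. }
  assert (HDeq : forall t, 0 < t < 1 -> Dy t = h t - c' - q t / y t).
  { intros t Ht. unfold Dy, Gf. rewrite Eh, Eq, Eu by lra. rewrite Rmin_left; auto. apply HA; lra. }
  assert (W0 : w 0 = 0) by (unfold w; rewrite Z10; ring).
  assert (HWYU : forall t, 0 < t <= 1 -> w t <= y t <= u t) by (intros; split; auto).
  destruct (build_sol h q c' y Dy u w y0 Hyc (fun t Ht => HyD t Ht) HDc HDeq Hy1 Uc U0
              (cont01_lin z1 _ Z1c) W0 HWYU Un) as [z Hz].
  assert (Hge := proj1 (Hc' y0 Hy0) (ex_intro _ z Hz)). lra.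
Qed.


Theorem corollary5p3 (f h q : R -> R) (cstar : R) (beta : R -> R)
  (Hf : C1_01 f h) (Hf0 : f 0 = 0) (Hq : cond_q q)
  (Hcstar : forall c, (exists z, sol_P00 h q c z) <-> c >= cstar)
  (Hbeta : forall c, c > cstar ->
     beta c < 0 /\
     (forall b, b < 0 -> ((exists z, sol_P h q c z /\ z 1 = b) <-> b >= beta c))) :
  (forall c1 c2, cstar < c1 -> c1 < c2 -> beta c2 < beta c1) /\
  is_lim beta p_infty m_infty.
Proof.
  split.
  - intros c1 c2 H1 H2. pose proof (key f h q cstar beta Hf Hq Hbeta c1 c2 H1 H2). lra.
  - intros P [M HM]. set (c0 := cstar + 1).
    exists (Rmax c0 (c0 + beta c0 - M)). intros x Hx. apply HM.
    assert (c0 <= Rmax c0 (c0 + beta c0 - M)) by apply Rmax_l.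
    assert (c0 + beta c0 - M <= Rmax c0 (c0 + beta c0 - M)) by apply Rmax_r.
    pose proof (key f h q cstar beta Hf Hq Hbeta c0 x ltac:(unfold c0; lra) ltac:(lra)). lra.
Qed.
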